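(* Let $D\le E$ be subgroups of a group $G$ with $E$ normal in $G$, and assume that the sandwich classification theorem holds for $L(D,E)$. Suppose further: (1) $D$ is generated by a union of finitely generated perfect subgroups; (2) for every $D$-full subgroup $F\le E$, the quotient group $N_E(F)/F$ is quasi-solvable. Then the sandwich classification theorem holds for $L(D,G)$, and the set of $D$-full subgroups of $G$ coincides with the set of $D$-full subgroups of $E$.
   Context: A group is perfect if it equals its commutator subgroup. A group is quasi-solvable if it is the union of an ascending chain of solvable subgroups. $X^Y$ denotes the subgroup generated by all $b^{-1}ab$, $a\in X$, $b\in Y$. $L(D,G)$ is the lattice of subgroups of $G$ containing $D$; $F\in L(D,G)$ is $D$-full if $D^F=F$. The lattice $L(D,G)$ satisfies the sandwich classification theorem if for every $H\in L(D,G)$ the subgroup $D^H$ is $D$-full and $H\le N_G(D^H)$ (equivalently, $L(D,G)$ is the union of the sets $\{H: F\le H\le N_G(F)\}$ over $D$-full $F$). *)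

(* Defs.v *)
From Stdlib Require Import List.

Record grp := Grp {
  carrier :> Type;
  mul : carrier -> carrier -> carrier;
  inv : carrier -> carrier;
  one : carrier;
  mulA : forall x y z, mul x (mul y z) = mul (mul x y) z;
  mul1g : forall x, mul one x = x;
  mulVg : forall x, mul (inv x) x = one
}.

Section Defs.
Variable G : grp.

Definition subset (X Y : G -> Prop) : Prop := forall x, X x -> Y x.
Definition same (X Y : G -> Prop) : Prop := forall x, X x <-> Y x.

Definition subgroup (H : G -> Prop) : Prop :=
  H (one G) /\ (forall x y, H x -> H y -> H (mul G x y)) /\ (forall x, H x -> H (inv G x)).

Definition gen (S : G -> Prop) : G -> Prop :=
  fun x => forall H, subgroup H -> subset S H -> H x.

Definition conjg (a b : G) : G := mul G (mul G (inv G b) a) b.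

Definition conj_closure (X Y : G -> Prop) : G -> Prop :=
  gen (fun z => exists a b, X a /\ Y b /\ z = conjg a b).

Definition normalizer (Y X : G -> Prop) : G -> Prop :=
  fun g => Y g /\ forall x, X x <-> X (conjg x g).

Definition normal_in_G (E : G -> Prop) : Prop :=
  subgroup E /\ forall x g, E x -> E (conjg x g).

Definition commg (a b : G) : G := mul G (mul G (mul G (inv G a) (inv G b)) a) b.

Definition derived_sub (H : G -> Prop) : G -> Prop :=
  gen (fun z => exists a b, H a /\ H b /\ z = commg a b).

Fixpoint derived (n : nat) (H : G -> Prop) : G -> Prop :=
  match n with 0 => H | S m => derived_sub (derived m H) end.

Definition perfect (H : G -> Prop) : Prop := subgroup H /\ same H (derived_sub H).

Definition fin_gen (H : G -> Prop) : Prop :=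
  exists l : list G, same H (gen (fun x => In x l)).

Definition in_L (D K H : G -> Prop) : Prop := subgroup H /\ subset D H /\ subset H K.

Definition D_full (D F : G -> Prop) : Prop := same (conj_closure D F) F.

Definition sandwich (D K : G -> Prop) : Prop :=
  forall H, in_L D K H ->
    D_full D (conj_closure D H) /\ subset H (normalizer K (conj_closure D H)).

Definition gen_by_fg_perfect (D : G -> Prop) : Prop :=
  exists P : (G -> Prop) -> Prop,
    (forall Q, P Q -> perfect Q /\ fin_gen Q) /\
    same D (gen (fun x => exists Q, P Q /\ Q x)).

(* The quotient N/F (F normal in N) is quasi-solvable: it is the union of an
   ascending chain of solvable subgroups.  Via the correspondence theorem,
   subgroups of N/F are H/F with F <= H <= N, and H/F is solvable iff some
   derived subgroup H^(n) lies in F. *)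
Definition quasi_solvable_quot (N F : G -> Prop) : Prop :=
  exists C : (G -> Prop) -> Prop,
    (forall H, C H -> subgroup H /\ subset F H /\ subset H N /\
                      exists n, subset (derived n H) F) /\
    (forall H1 H2, C H1 -> C H2 -> subset H1 H2 \/ subset H2 H1) /\
    (forall x, N x -> exists H, C H /\ H x).

End Defs.

(* Main.v *)
Require Import Defs.
From Stdlib Require Import List.

Lemma mulA' (G : grp) (x y z : G) : mul G (mul G x y) z = mul G x (mul G y z).
Proof. symmetry; apply mulA. Qed.

Lemma mulgV (G : grp) (x : G) : mul G x (inv G x) = one G.
Proof.
  rewrite <- (mul1g G (mul G x (inv G x))).
  rewrite <- (mulVg G (inv G x)) at 1.
  rewrite <- mulA. rewrite (mulA G (inv G x) x). rewrite mulVg, mul1g, mulVg. reflexivity.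
Qed.

Lemma mulg1 (G : grp) (x : G) : mul G x (one G) = x.
Proof. rewrite <- (mulVg G x), mulA, mulgV, mul1g. reflexivity. Qed.

Lemma mulKg (G : grp) (x y : G) : mul G x (mul G (inv G x) y) = y.
Proof. rewrite mulA, mulgV, mul1g. reflexivity. Qed.

Lemma mulKVg (G : grp) (x y : G) : mul G (inv G x) (mul G x y) = y.
Proof. rewrite mulA, mulVg, mul1g. reflexivity. Qed.

Lemma inv_uniq (G : grp) (a b : G) : mul G a b = one G -> a = inv G b.
Proof.
  intro H. rewrite <- (mulg1 G a), <- (mulgV G b), mulA, H, mul1g. reflexivity.
Qed.

Lemma inv_inv (G : grp) (x : G) : inv G (inv G x) = x.
Proof. symmetry. apply inv_uniq. apply mulgV. Qed.

Lemma inv_mul (G : grp) (x y : G) : inv G (mul G x y) = mul G (inv G y) (inv G x).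
Proof. symmetry. apply inv_uniq. rewrite mulA'. rewrite (mulA G (inv G x)), mulVg, mul1g, mulVg.
  reflexivity. Qed.

Lemma inv_one (G : grp) : inv G (one G) = one G.
Proof. symmetry. apply inv_uniq. apply mul1g. Qed.

Ltac gsimpl := repeat progress (rewrite ?inv_mul, ?inv_inv, ?inv_one, ?mulA',
  ?mulKg, ?mulKVg, ?mulgV, ?mulVg, ?mulg1, ?mul1g).

Lemma conjg_mul (G : grp) (x y h : G) : conjg G (mul G x y) h = mul G (conjg G x h) (conjg G y h).
Proof. unfold conjg. gsimpl. reflexivity. Qed.
Lemma conjg_one (G : grp) (h : G) : conjg G (one G) h = one G.
Proof. unfold conjg. gsimpl. reflexivity. Qed.
Lemma conjg_inv (G : grp) (x h : G) : conjg G (inv G x) h = inv G (conjg G x h).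
Proof. unfold conjg. gsimpl. reflexivity. Qed.
Lemma conjg_conjg (G : grp) (x a b : G) : conjg G (conjg G x a) b = conjg G x (mul G a b).
Proof. unfold conjg. gsimpl. reflexivity. Qed.
Lemma conjg1 (G : grp) (x : G) : conjg G x (one G) = x.
Proof. unfold conjg. gsimpl. reflexivity. Qed.
Lemma conjgK (G : grp) (x h : G) : conjg G (conjg G x h) (inv G h) = x.
Proof. unfold conjg. gsimpl. reflexivity. Qed.

Definition ghom (G : grp) (f : G -> G) : Prop :=
  (forall x y, f (mul G x y) = mul G (f x) (f y)) /\ f (one G) = one G /\
  (forall x, f (inv G x) = inv G (f x)).

Lemma conj_hom (G : grp) (h : G) : ghom G (fun x => conjg G x h).
Proof. split; [|split]; intros; [apply conjg_mul|apply conjg_one|apply conjg_inv]. Qed.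

Lemma hom_commg (G : grp) f (a b : G) : ghom G f -> f (commg G a b) = commg G (f a) (f b).
Proof. intros [Hm [H1 Hi]]. unfold commg. rewrite !Hm, !Hi. reflexivity. Qed.

Lemma gen_sub (G : grp) S : subgroup G (gen G S).
Proof.
  unfold gen; split; [|split].
  - intros H [H1 _] _. exact H1.
  - intros x y Hx Hy H HH HS. pose proof HH as [_ [Hm _]]. apply Hm; [apply Hx|apply Hy]; auto.
  - intros x Hx H HH HS. pose proof HH as [H1 [Hm Hi]]. apply Hi. apply Hx; auto.
Qed.

Lemma gen_incl (G : grp) S : subset G S (gen G S).
Proof. intros x Sx H _ HS. apply HS, Sx. Qed.

Lemma gen_min (G : grp) S H : subgroup G H -> subset G S H -> subset G (gen G S) H.
Proof. intros HH HS x Hx. apply Hx; auto. Qed.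

Lemma pull_sub (G : grp) f H : ghom G f -> subgroup G H -> subgroup G (fun x => H (f x)).
Proof.
  intros [Hm [H1 Hi]] [S1 [Sm Si]]. split; [|split].
  - rewrite H1; auto.
  - intros x y Hx Hy. rewrite Hm; auto.
  - intros x Hx. rewrite Hi; auto.
Qed.

Lemma derived_sub_mono (G : grp) X Y : subset G X Y -> subset G (derived_sub G X) (derived_sub G Y).
Proof.
  intros HXY. apply gen_min. apply gen_sub.
  intros z [a [b [Ha [Hb ->]]]]. apply gen_incl. exists a, b. auto.
Qed.

Lemma derived_mono (G : grp) n X Y : subset G X Y -> subset G (derived G n X) (derived G n Y).
Proof.
  induction n; simpl; auto. intros. apply derived_sub_mono; auto.
Qed.

Lemma derived_sub_pull (G : grp) f X : ghom G f ->
  subset G (derived_sub G (fun x => X (f x))) (fun x => derived_sub G X (f x)).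
Proof.
  intros Hf. apply gen_min. apply pull_sub; auto. apply gen_sub.
  intros z [a [b [Ha [Hb ->]]]]. rewrite hom_commg; auto. apply gen_incl. exists (f a), (f b). auto.
Qed.

Lemma derived_pull (G : grp) f n X : ghom G f ->
  subset G (derived G n (fun x => X (f x))) (fun x => derived G n X (f x)).
Proof.
  intros Hf. induction n; simpl.
  - intros x Hx; exact Hx.
  - intros x Hx. apply (derived_sub_pull G f (derived G n X) Hf).
    exact (derived_sub_mono G _ _ IHn x Hx).
Qed.

Lemma perfect_derived (G : grp) K n : perfect G K -> subset G K (derived G n K).
Proof.
  intros [_ HK]. induction n; simpl.
  - intros x Hx; exact Hx.
  - intros x Hx. apply (derived_sub_mono G K). exact IHn. apply HK, Hx.
Qed.

Lemma key_perfect (G : grp) f N F K : ghom G f -> quasi_solvable_quot G N F ->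
  perfect G K -> fin_gen G K -> (forall x, K x -> N (f x)) -> forall x, K x -> F (f x).
Proof.
  intros Hf [C [HC [Htot Hcov]]] Hper [l Hl] HKN.
  assert (Hlist : forall l', (forall y, In y l' -> K y) -> exists H, C H /\ forall y, In y l' -> H (f y)).
  { induction l' as [|a l' IH]; intros Hin.
    - destruct (Hcov (f (one G))) as [H [CH Hx]].
      + apply HKN. destruct Hper as [[K1 _] _]. exact K1.
      + exists H. split; auto. intros y [].
    - destruct IH as [H [CH HH]]. { intros y Hy. apply Hin. right. exact Hy. }
      destruct (Hcov (f a)) as [H' [CH' Ha]]. { apply HKN, Hin. left. reflexivity. }
      destruct (Htot H H' CH CH') as [Hs|Hs].
      + exists H'. split; auto. intros y [<-|Hy]; auto.
      + exists H. split; auto. intros y [<-|Hy]; auto. }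
  destruct (Hlist l) as [H [CH HH]].
  { intros y Hy. apply Hl. apply gen_incl. exact Hy. }
  destruct (HC H CH) as [Hsub [_ [_ [n Hn]]]].
  assert (KH : subset G K (fun x => H (f x))).
  { intros x Hx. apply Hl in Hx. revert x Hx. apply gen_min. apply pull_sub; auto.
    intros y Hy. apply HH, Hy. }
  intros x Hx. apply Hn. apply (derived_pull G f n H Hf).
  apply (derived_mono G n K _ KH). apply perfect_derived; auto.
Qed.

Lemma cc_mono (G : grp) D Y Y' : subset G Y Y' -> subset G (conj_closure G D Y) (conj_closure G D Y').
Proof.
  intros HY. apply gen_min. apply gen_sub.
  intros z [a [b [Ha [Hb ->]]]]. apply gen_incl. exists a, b. auto.
Qed.

Lemma cc_in_E (G : grp) D E Y : subset G D E -> normal_in_G G E -> subset G (conj_closure G D Y) E.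
Proof.
  intros HDE [HEs HEn]. apply gen_min; auto.
  intros z [a [b [Ha [Hb ->]]]]. apply HEn, HDE, Ha.
Qed.

Lemma cc_D (G : grp) D Y : Y (one G) -> subset G D (conj_closure G D Y).
Proof.
  intros Y1 d Hd. apply gen_incl. exists d, (one G). rewrite conjg1. auto.
Qed.

Lemma cc_norm (G : grp) D H : subgroup G H -> forall h, H h ->
  forall x, conj_closure G D H x -> conj_closure G D H (conjg G x h).
Proof.
  intros HH h Hh. apply gen_min. apply (pull_sub G (fun x => conjg G x h)). apply conj_hom. apply gen_sub.
  intros z [a [b [Ha [Hb ->]]]]. rewrite conjg_conjg. apply gen_incl. exists a, (mul G b h).
  destruct HH as [_ [Hm _]]. auto.
Qed.

Theorem lemma2p5 (G : grp) (D E : G -> Prop) :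
  subgroup G D -> subgroup G E -> subset G D E -> normal_in_G G E ->
  sandwich G D E ->
  gen_by_fg_perfect G D ->
  (forall F, in_L G D E F -> D_full G D F ->
     quasi_solvable_quot G (normalizer G E F) F) ->
  sandwich G D (fun _ => True) /\
  (forall F, (in_L G D (fun _ => True) F /\ D_full G D F) <->
             (in_L G D E F /\ D_full G D F)).
Proof.
  intros HD HE HDE HEn Hsand [P [HP HDgen]] Hqs. split.
  - intros H [HH [HDH _]].
    set (HE' := fun x => H x /\ E x).
    assert (LHE : in_L G D E HE').
    { destruct HH as [H1 [Hm Hi]]. destruct HE as [E1 [Em Ei]].
      split; [split; [|split]|split].
      - split; auto.
      - intros x y [? ?] [? ?]; split; auto.
      - intros x [? ?]; split; auto.
      - intros x Hx; split; auto.
      - intros x [? ?]; auto. }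
    destruct (Hsand HE' LHE) as [Hfull Hnorm].
    set (F := conj_closure G D HE') in *.
    assert (LF : in_L G D E F).
    { split; [apply gen_sub|split]. apply cc_D. split; [apply HH|apply HE].
      apply cc_in_E; auto. }
    pose proof (Hqs F LF Hfull) as Q.
    assert (C1 : forall h, H h -> forall d, D d -> F (conjg G d h)).
    { intros h Hh d Hd. apply HDgen in Hd. revert d Hd. apply gen_min.
      apply (pull_sub G (fun x => conjg G x h)). apply conj_hom. apply gen_sub.
      intros x [K [PK Kx]]. destruct (HP K PK) as [Kp Kfg].
      apply (key_perfect G (fun x => conjg G x h) (normalizer G E F) F K (conj_hom G h) Q Kp Kfg);
        auto.
      intros y Ky. assert (Dy : D y). { apply HDgen. apply gen_incl. exists K; auto. }
      apply Hnorm. split.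
      - destruct HH as [_ [Hm Hi]]. unfold conjg. apply Hm; auto.
      - destruct HEn as [_ Hn]. apply Hn. auto. }
    assert (C2 : same G (conj_closure G D H) F).
    { intro x; split.
      - revert x. apply gen_min. apply gen_sub.
        intros z [a [b [Ha [Hb ->]]]]. apply C1; auto.
      - apply cc_mono. intros y [? ?]; auto. }
    split.
    + intro x; split.
      * intro Hx. apply (proj2 (C2 x)). apply (proj1 (Hfull x)). exact (cc_mono G D (conj_closure G D H) F (fun y Hy => proj1 (C2 y) Hy) x Hx).
      * intro Hx. apply (proj1 (C2 x)) in Hx. apply (proj2 (Hfull x)) in Hx. exact (cc_mono G D F (conj_closure G D H) (fun y Hy => proj2 (C2 y) Hy) x Hx).
    + intros h Hh. split; auto. intro x; split.
      * apply cc_norm; auto.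
      * intro Hx. rewrite <- (conjgK G x h). apply cc_norm; auto.
        destruct HH as [_ [_ Hi]]; auto.
  - intro F; split.
    + intros [[HF [HDF _]] Hfull]. split; auto. split; auto. split; auto.
      intros x Hx. apply Hfull in Hx. apply (cc_in_E G D E F HDE HEn x Hx).
    + intros [[HF [HDF _]] Hfull]. split; auto. split; auto. split; auto.
      intros ? ?; exact I.
Qed.
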